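(* Let $\Lambda\ge1$, $\tau=\Lambda/(\Lambda+1)$. Let $\bar E_-,\bar E_+\in\mathcal E_\infty(\Lambda)$ satisfy $\mathbb E[Z/\bar E_-\mid X]=\mathbb E[Z/\bar E_+\mid X]=1$ a.s., and $$1/\bar E_-=\begin{cases}1+\frac{1-e(X)}{e(X)}\Lambda & \text{if } Y<Q_{1-\tau}(X,1)\\ 1+\frac{1-e(X)}{e(X)}\Lambda^{-1}&\text{if } Y>Q_{1-\tau}(X,1)\end{cases},\qquad 1/\bar E_+=\begin{cases}1+\frac{1-e(X)}{e(X)}\Lambda & \text{if } Y>Q_{\tau}(X,1)\\ 1+\frac{1-e(X)}{e(X)}\Lambda^{-1}&\text{if } Y<Q_{\tau}(X,1)\end{cases}.$$ Then $\bar E_-$ solves both problems (a) minimize $\mathbb E[YZ/\bar E]$ over $\bar E\in\mathcal E_\infty(\Lambda)$ subject to $\mathbb E[Q_{1-\tau}(X,1)Z/\bar E]=\mathbb E[Q_{1-\tau}(X,1)]$, and (b) minimize $\mathbb E[YZ/\bar E]$ over $\bar E\in\mathcal E_\infty(\Lambda)$ subject to $\mathbb E[Z/\bar E\mid X]=1$; and $\bar E_+$ solves both problems (c) maximize $\mathbb E[YZ/\bar E]$ over $\bar E\in\mathcal E_\infty(\Lambda)$ subject to $\mathbb E[Q_{\tau}(X,1)Z/\bar E]=\mathbb E[Q_{\tau}(X,1)]$, and (d) maximize $\mathbb E[YZ/\bar E]$ over $\bar E\in\mathcal E_\infty(\Lambda)$ subject to $\mathbb E[Z/\bar E\mid X]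=1$.
   Context: Observed data $(X,Y,Z)\sim P$, $X\in\mathcal X\subseteq\mathbb R^d$, $Y\in\mathbb R$, $Z\in\{0,1\}$; $e(x)=P(Z=1\mid X=x)$ with $0<e(X)<1$ a.s., $\mathbb E|Y|<\infty$. $\mathcal E_\infty(\Lambda)$ is the set of random variables $\bar E$ defined jointly with $(X,Y,Z)$ with $\Lambda^{-1}\le\frac{\bar E/(1-\bar E)}{e(X)/(1-e(X))}\le\Lambda$ a.s. $F(y\mid x,z)=P(Y\le y\mid X=x,Z=z)$, $Q_t(x,z)=\inf\{q: F(q\mid x,z)\ge t\}$. *)

(* Defs.v *)
From HB Require Import structures.
From mathcomp Require Import all_boot all_order all_algebra.
From mathcomp Require Import all_classical all_reals all_analysis.
Set Implicit Arguments. Unset Strict Implicit. Unset Printing Implicit Defensive.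
Import Order.TTheory GRing.Theory Num.Theory.
Import numFieldNormedType.Exports.
Local Open Scope classical_set_scope.
Local Open Scope ring_scope.

Section sensitivity.
Context {R : realType} {d : measure_display} {Omega : measurableType d}.
Variable P : probability Omega R.
Variable n : nat.
(* covariates X in R^n (tuples with the product = Borel sigma-algebra),
   outcome Y, binary treatment Z *)
Variables (X : Omega -> n.-tuple R) (Y : Omega -> R) (Z : Omega -> bool).

Definition Zr (w : Omega) : R := (Z w)%:R.

(* e is a version of the propensity score e(x) = P(Z = 1 | X = x),
   with 0 < e(X) < 1 a.s. *)
Definition is_propensity (e : n.-tuple R -> R) : Prop :=
  measurable_fun setT e /\
  (forall B : set (n.-tuple R), measurable B ->
     (\int[P]_(w in X @^-1` B) (Zr w)%:E = \int[P]_(w in X @^-1` B) (e (X w))%:E)%E) /\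
  {ae P, forall w, 0 < e (X w) < 1}.

(* F is a (regular) version of the conditional c.d.f.
   F y x z = P(Y <= y | X = x, Z = z) *)
Definition is_cond_cdf (F : R -> n.-tuple R -> bool -> R) : Prop :=
  (forall x z, {homo (fun y => F y x z) : a b / a <= b}) /\
  (forall x z y, F q x z @[q --> y^'+] --> F y x z) /\
  (forall x z, F q x z @[q --> -oo] --> (0 : R)) /\
  (forall x z, F q x z @[q --> +oo] --> (1 : R)) /\
  (forall y z, measurable_fun setT (fun x => F y x z)) /\
  (forall y z (B : set (n.-tuple R)), measurable B ->
     P (X @^-1` B `&` Z @^-1` [set z] `&` [set w | Y w <= y]) =
     (\int[P]_(w in X @^-1` B `&` Z @^-1` [set z]) (F y (X w) z)%:E)%E).

Definition cond_quantile (F : R -> n.-tuple R -> bool -> R) (t : R)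
  (x : n.-tuple R) (z : bool) : R := inf [set q : R | t <= F q x z].

Definition odds (p : R) : R := p / (1 - p).

Definition E_infty (e : n.-tuple R -> R) (Lambda : R) (Eb : Omega -> R) : Prop :=
  measurable_fun setT Eb /\
  {ae P, forall w, Lambda^-1 <= odds (Eb w) / odds (e (X w)) <= Lambda}.

(* E[W | X] = 1 a.s.: W is integrable and the constant 1 satisfies the
   defining property of the conditional expectation given sigma(X) *)
Definition cond_exp_X_one (W : Omega -> R) : Prop :=
  P.-integrable setT (fun w => (W w)%:E) /\
  forall B : set (n.-tuple R), measurable B ->
    (\int[P]_(w in X @^-1` B) (W w)%:E)%E = P (X @^-1` B).

Definition objective (Eb : Omega -> R) : \bar R :=
  (\int[P]_w (Y w * Zr w / Eb w)%:E)%E.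

Definition feasible_quantile (e : n.-tuple R -> R) (Lambda : R)
  (q : n.-tuple R -> R) (Eb : Omega -> R) : Prop :=
  E_infty e Lambda Eb /\
  P.-integrable setT (fun w => (Y w * Zr w / Eb w)%:E) /\
  P.-integrable setT (fun w => (q (X w) * Zr w / Eb w)%:E) /\
  (\int[P]_w (q (X w) * Zr w / Eb w)%:E = \int[P]_w (q (X w))%:E)%E.

Definition feasible_cond (e : n.-tuple R -> R) (Lambda : R)
  (Eb : Omega -> R) : Prop :=
  E_infty e Lambda Eb /\
  P.-integrable setT (fun w => (Y w * Zr w / Eb w)%:E) /\
  cond_exp_X_one (fun w => Zr w / Eb w).

Definition solves_min (feas : (Omega -> R) -> Prop) (Eb0 : Omega -> R) : Prop :=
  feas Eb0 /\ forall Eb, feas Eb -> (objective Eb0 <= objective Eb)%E.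

Definition solves_max (feas : (Omega -> R) -> Prop) (Eb0 : Omega -> R) : Prop :=
  feas Eb0 /\ forall Eb, feas Eb -> (objective Eb <= objective Eb0)%E.

End sensitivity.

(* Main.v *)
Require Import Defs.
From HB Require Import structures.
From mathcomp Require Import all_boot all_order all_algebra.
From mathcomp Require Import all_classical all_reals all_analysis.
From mathcomp Require lra ring finmap measurable_realfun.
Import Order.TTheory GRing.Theory Num.Theory.
Import numFieldNormedType.Exports.
Local Open Scope classical_set_scope.
Local Open Scope ring_scope.

Module HelpersH.
Import lra ring finmap measurable_realfun.
Set Implicit Arguments. Unset Strict Implicit.

Section quant.
Context {R : realType}.
Lemma quant_le (G : R -> R) (t r : R) :
  {homo G : a b / a <= b} ->
  (forall y, G q @[q --> y^'+] --> G y) ->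
  G q @[q --> -oo] --> (0 : R) ->
  G q @[q --> +oo] --> (1 : R) ->
  0 < t < 1 ->
  (inf [set q | t <= G q] <= r <-> t <= G r).
Proof.
move=> Gnd Grc Gm Gp /andP[t0 t1].
set S := [set q | t <= G q].
have [M HM] : exists M, forall q, q <= M -> G q < t.
  have := cvgr_lt _ Gm t t0.
  move=> [M [_ HM]]. exists (M - 1) => q qM. apply: HM. lra.
have lbS : lbound S M.
  move=> s Ss; rewrite leNgt; apply/negP => sM.
  by move: (HM s (ltW sM)); rewrite ltNge Ss.
have neS : S !=set0.
  have := cvgr_gt _ Gp t t1.
  move=> [N [_ HN]]. exists (N + 1); apply/ltW/HN; lra.
split => [infr|Hr]; last first.
  by apply: (ge_inf (ex_intro _ M lbS)).
rewrite leNgt; apply/negP => Grt.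
have Hn : \forall u \near r^'+, G u < t by exact: (cvgr_lt _ (Grc r) _ Grt).
move: Hn; rewrite near_withinE /= => /nbhs_ballP [δ /= δ0 Hδ].
have lb2 : lbound S (r + δ / 2).
  move=> s Ss; rewrite leNgt; apply/negP => sr.
  have [sr'|rs] := leP s r.
    by move: (le_lt_trans (Gnd _ _ sr') Grt); rewrite ltNge Ss.
  have : G s < t.
    apply: Hδ => //; rewrite /ball /= ltr_norml; apply/andP; split; lra.
  by rewrite ltNge Ss.
have := lb_le_inf neS lb2; lra.
Qed.
End quant.

Section qmeas.
Context {R : realType} {d' : measure_display} {T : measurableType d'}.
Lemma quant_meas (G : R -> T -> R) (t : R) :
  (forall x, {homo (fun y => G y x) : a b / a <= b}) ->
  (forall x y, G q x @[q --> y^'+] --> G y x) ->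
  (forall x, G q x @[q --> -oo] --> (0 : R)) ->
  (forall x, G q x @[q --> +oo] --> (1 : R)) ->
  (forall y, measurable_fun setT (G y)) ->
  0 < t < 1 ->
  measurable_fun setT (fun x => inf [set q | t <= G q x]).
Proof.
move=> Gnd Grc Gm Gp mG t01.
apply: (measurability (@measurable_realfun.RGenOInfty.G R)); first exact: measurable_realfun.RGenOInfty.measurableE.
move=> _ [_ [r ->] <-].
have -> : setT `&` (fun x => inf [set q | t <= G q x]) @^-1` `]r, +oo[ =
    setT `&` (G r) @^-1` `]-oo, t[.
  apply/seteqP; split => x /= [_]; rewrite !in_itv /= andbT => h; split => //.
    rewrite ltNge; apply/negP => /(quant_le _ (Gnd x) (Grc x) (Gm x) (Gp x) t01).
    by rewrite leNgt h.
  rewrite ltNge; apply/negP => /(quant_le _ (Gnd x) (Grc x) (Gm x) (Gp x) t01).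
  by rewrite leNgt h.
exact: (mG r) measurableT _ (measurable_itv _).
Qed.
End qmeas.

Section keyl.
Context {R : realType} {d d' : measure_display} {Omega : measurableType d} {T : measurableType d'}.
Variables (P : {measure set Omega -> \bar R}) (X : Omega -> T).
Hypothesis mX : measurable_fun setT X.
Import HBNNSimple.

Lemma sfun_int (g : {nnsfun T >-> R}) (V : Omega -> R) :
  measurable_fun setT V -> (forall w, 0 <= V w) ->
  (\int[P]_w ((g (X w) * V w)%:E) =
   \sum_(y <- fset_set (range g)) (y%:E * \int[P]_(w in X @^-1` (g @^-1` [set y])) (V w)%:E))%E.
Proof.
move=> mV V0.
have gE w : g (X w) * V w = \sum_(y <- fset_set (range g)) (y * \1_(g @^-1` [set y]) (X w) * V w).
  by rewrite fimfunE fsbig_finite //= mulr_suml.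
under eq_integral do rewrite gE -sumEFin.
rewrite ge0_integral_sum //.
- apply: eq_big_seq => y; rewrite in_fset_set // => /set_mem -[x _ <-].
  under eq_integral do rewrite -mulrA EFinM.
  rewrite ge0_integralZl_EFin //.
  + congr (_ * _)%E; rewrite [RHS]integral_mkcond.
    apply: eq_integral => w _; rewrite /patch indicE.
    have -> : (X w \in g @^-1` [set g x]) = (w \in X @^-1` (g @^-1` [set g x])).
      by apply/idP/idP => /set_mem h; apply/mem_set.
    by case: (w \in _); rewrite ?mul1r ?mul0r.
  + by move=> w _; rewrite lee_fin mulr_ge0 // indicE.
  + apply/measurable_EFinP; apply: measurable_funM => //.
    apply: measurableT_comp => //; apply: measurable_indic.
- move=> y; apply/measurable_EFinP; apply: measurable_funM => //.
  apply: measurable_funM => //.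
  apply: measurableT_comp => //; apply: measurable_indic.
- move=> y w _; rewrite lee_fin indicE.
  case: (boolP (X w \in g @^-1` [set y])) => h; last by rewrite mulr0 mul0r.
  have <- : g (X w) = y by move/set_mem: h.
  by rewrite mulr1 mulr_ge0.
Qed.

Lemma preimX_meas B : measurable B -> measurable (X @^-1` B).
Proof. by move=> mB; rewrite -[X @^-1` _]setTI; exact: mX. Qed.

Lemma key_ext (V : Omega -> R) (h : T -> R) :
  measurable_fun setT V -> (forall w, 0 <= V w) ->
  (forall B, measurable B -> (\int[P]_(w in X @^-1` B) (V w)%:E = P (X @^-1` B))%E) ->
  measurable_fun setT h -> (forall x, 0 <= h x) ->
  (\int[P]_w (h (X w) * V w)%:E = \int[P]_w (h (X w))%:E)%E.
Proof.
move=> mV V0 hV mh h0.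
have mh' : measurable_fun setT (EFin \o h) by apply/measurable_EFinP.
pose g := nnsfun_approx measurableT mh'.
have lim (U : Omega -> R) : measurable_fun setT U -> (forall w, 0 <= U w) ->
  (\int[P]_w (h (X w) * U w)%:E = limn (fun k => \int[P]_w (g k (X w) * U w)%:E))%E.
  move=> mU U0; rewrite -monotone_convergence //.
  - apply: eq_integral => w _; apply/esym/cvg_lim => //.
    rewrite EFinM; under eq_fun do rewrite EFinM.
    apply: cvgeMr => //.
    apply: (cvg_nnsfun_approx measurableT mh' _ I) => x _; by rewrite lee_fin.
  - move=> k; apply/measurable_EFinP; apply: measurable_funM => //.
    exact: measurableT_comp.
  - by move=> k w _; rewrite lee_fin mulr_ge0.
  - move=> w _ a b ab; rewrite lee_fin ler_wpM2r //.
    exact/lefP/nd_nnsfun_approx.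
rewrite (lim V) //.
have -> : (\int[P]_w (h (X w))%:E = \int[P]_w (h (X w) * 1)%:E)%E.
  by apply: eq_integral => w _; rewrite mulr1.
rewrite (lim (fun=> 1)) //; congr (limn _); apply/funext => k.
rewrite !sfun_int //; apply: eq_big_seq => y _.
rewrite hV; last exact: measurable_funPTI.
by rewrite integral_cst ?mul1e //; apply: preimX_meas; exact: measurable_funPTI.
Qed.

Lemma maxr_dec (x : R) : x = Num.max x 0 - Num.max (- x) 0.
Proof.
rewrite /Order.max; case: (ltP x 0) => h1; case: (ltP (- x) 0) => h2; lra.
Qed.

Lemma max0_ge0 (x : R) : 0 <= Num.max x 0.
Proof. rewrite /Order.max; case: ltP => h; lra. Qed.

Lemma max0_abs (x : R) : `|Num.max x 0| <= `|x|.
Proof. rewrite /Order.max; case: ltP => h; rewrite ?normr0 //. Qed.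

Lemma max0_absN (x : R) : `|Num.max (- x) 0| <= `|x|.
Proof. by rewrite -(normrN x) max0_abs. Qed.

Lemma integ_ext (V : Omega -> R) (q : T -> R) :
  measurable_fun setT V -> (forall w, 0 <= V w) ->
  (forall B, measurable B -> (\int[P]_(w in X @^-1` B) (V w)%:E = P (X @^-1` B))%E) ->
  measurable_fun setT q -> P.-integrable setT (fun w => (q (X w))%:E) ->
  P.-integrable setT (fun w => (q (X w) * V w)%:E) /\
  (\int[P]_w (q (X w) * V w)%:E = \int[P]_w (q (X w))%:E)%E.
Proof.
move=> mV V0 hV mq iq.
have part (s : T -> R) : measurable_fun setT s -> (forall x, 0 <= s x) ->
    (forall x, `|s x| <= `|q x|) ->
    [/\ P.-integrable setT (fun w => (s (X w))%:E),
        P.-integrable setT (fun w => (s (X w) * V w)%:E) &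
        (\int[P]_w (s (X w) * V w)%:E = \int[P]_w (s (X w))%:E)%E].
  move=> ms s0 sq.
  have ms' : measurable_fun setT (fun w => (s (X w))%:E).
    by apply/measurable_EFinP; exact: measurableT_comp.
  have msV : measurable_fun setT (fun w => (s (X w) * V w)%:E).
    apply/measurable_EFinP; apply: measurable_funM => //; exact: measurableT_comp.
  have isI : P.-integrable setT (fun w => (s (X w))%:E).
    by apply: (le_integrable measurableT ms' _ iq) => w _; rewrite !abse_EFin lee_fin.
  have K := key_ext mV V0 hV ms s0.
  split => //; apply/integrableP; split => //.
  have -> : (\int[P]_w `|(s (X w) * V w)%:E| = \int[P]_w (s (X w) * V w)%:E)%E.
    by apply: eq_integral => w _; rewrite gee0_abs // lee_fin mulr_ge0.
  rewrite K; move/integrableP: isI => [_].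
  have -> // : (\int[P]_w `|(s (X w))%:E| = \int[P]_w (s (X w))%:E)%E.
  by apply: eq_integral => w _; rewrite gee0_abs // lee_fin.
have mqp : measurable_fun setT (fun x => Num.max (q x) 0).
  by apply: measurable_maxr.
have mqn : measurable_fun setT (fun x => Num.max (- q x) 0).
  by apply: measurable_maxr => //; exact: measurable_funN.
have [ip ipV Kp] := part _ mqp (fun x => max0_ge0 _) (fun x => max0_abs _).
have [in_ inV Kn] := part _ mqn (fun x => max0_ge0 _) (fun x => max0_absN _).
split.
  apply: (eq_integrable measurableT _ _ _ (integrableB measurableT ipV inV)).
  by move=> w _ /=; rewrite -EFinB -mulrBl -maxr_dec.
rewrite (eq_integral (fun w => (Num.max (q (X w)) 0 * V w)%:E - (Num.max (- q (X w)) 0 * V w)%:E)%E); last first.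
  by move=> w _ /=; rewrite -EFinB -mulrBl -maxr_dec.
rewrite integralB_EFin // Kp Kn -integralB_EFin //.
by apply: eq_integral => w _; rewrite -EFinB -maxr_dec.
Qed.
End keyl.

Section aeh.
Context {R : realType} {d : measure_display} {Omega : measurableType d}.
Variable (P : {measure set Omega -> \bar R}).

Lemma ae_transfer (f g : Omega -> R) : measurable_fun setT f ->
  P.-integrable setT (fun w => (g w)%:E) -> {ae P, forall w, f w = g w} ->
  P.-integrable setT (fun w => (f w)%:E) /\
  (\int[P]_w (f w)%:E = \int[P]_w (g w)%:E)%E.
Proof.
move=> mf ig fg.
have mf' : measurable_fun setT (fun w => (f w)%:E) by apply/measurable_EFinP.
have mg' := measurable_int _ ig.
have ae1 : ae_eq P setT (fun w => (f w)%:E) (fun w => (g w)%:E).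
  by apply: filterS fg => w -> .
split; last exact: ae_eq_integral.
apply/integrableP; split => //.
rewrite (ae_eq_integral (fun w => `|(g w)%:E|%E)) //.
- by move/integrableP : ig => [].
- exact: measurableT_comp.
- exact: measurableT_comp.
- by apply: filterS fg => w ->.
Qed.

Lemma ae_le_int (f g : Omega -> R) :
  P.-integrable setT (fun w => (f w)%:E) -> P.-integrable setT (fun w => (g w)%:E) ->
  {ae P, forall w, f w <= g w} ->
  (\int[P]_w (f w)%:E <= \int[P]_w (g w)%:E)%E.
Proof.
move=> i1 i2 [N [mN PN sub]].
rewrite (negligible_integral mN) // [leRHS](negligible_integral mN) //.
have mD : measurable (setT `\` N) by exact: measurableD.
apply: le_integral => //.
- by apply: (integrableS measurableT mD _ i1).
- by apply: (integrableS measurableT mD _ i2).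
move=> w /set_mem [_ Nw]; rewrite lee_fin.
by apply: contra_notT Nw => /negP h; apply: sub.
Qed.

Lemma core_ineq (f0 u0 f1 u1 : Omega -> R) :
  P.-integrable setT (fun w => (f0 w)%:E) -> P.-integrable setT (fun w => (u0 w)%:E) ->
  P.-integrable setT (fun w => (f1 w)%:E) -> P.-integrable setT (fun w => (u1 w)%:E) ->
  (\int[P]_w (u0 w)%:E = \int[P]_w (u1 w)%:E)%E ->
  {ae P, forall w, f0 w - u0 w <= f1 w - u1 w} ->
  (\int[P]_w (f0 w)%:E <= \int[P]_w (f1 w)%:E)%E.
Proof.
move=> i0 j0 i1 j1 hu hae.
have iB : P.-integrable setT (fun w => (f1 w - u1 w)%:E).
  apply: (eq_integrable measurableT _ _ _ (integrableB measurableT i1 j1)).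
  by move=> w _ /=; rewrite EFinB.
have ig : P.-integrable setT (fun w => (f1 w - u1 w + u0 w)%:E).
  apply: (eq_integrable measurableT _ _ _ (integrableD measurableT iB j0)).
  by move=> w _ /=; rewrite EFinD.
apply: (le_trans (ae_le_int i0 ig _)).
  by apply: filterS hae => w h; lra.
have -> : (\int[P]_w (f1 w - u1 w + u0 w)%:E =
    \int[P]_w (f1 w - u1 w)%:E + \int[P]_w (u0 w)%:E)%E.
  rewrite -integralD //; apply: eq_integral => w _; by rewrite EFinD.
have -> : (\int[P]_w (f1 w - u1 w)%:E =
    \int[P]_w (f1 w)%:E - \int[P]_w (u1 w)%:E)%E.
  rewrite -integralB_EFin //; apply: eq_integral => w _; by rewrite EFinB.
rewrite hu subeK //; exact: integrable_fin_num.
Qed.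
End aeh.

Unset Implicit Arguments. Set Strict Implicit.
End HelpersH.

Module HelpersM.
Import lra ring measurable_realfun.
Import HelpersH.

Section alg.
Context {R : realType}.

Lemma inv_bounds (u L : R) : 0 < L -> L^-1 <= u <= L -> L^-1 <= u^-1 <= L.
Proof.
move=> L0 /andP[h1 h2].
have u0 : 0 < u by apply: lt_le_trans h1; rewrite invr_gt0.
apply/andP; split.
  by rewrite lef_pV2 ?posrE.
by rewrite -[X in _ <= X]invrK lef_pV2 ?posrE ?invr_gt0.
Qed.

Lemma odds_bounds (p E L : R) : 0 < p < 1 -> 1 <= L ->
  L^-1 <= odds E / odds p <= L ->
  0 < E < 1 /\ 1 + (1 - p) / p * L^-1 <= E^-1 <= 1 + (1 - p) / p * L.
Proof.
move=> /andP[p0 p1] L1 hu.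
have L0 : 0 < L by lra.
have op0 : 0 < odds p by rewrite /odds divr_gt0 // subr_gt0.
set u := odds E / odds p in hu.
have u0 : 0 < u.
  by case/andP: hu => h _; apply: lt_le_trans h; rewrite invr_gt0.
have o0 : 0 < odds E.
  have -> : odds E = u * odds p by rewrite /u divfK // gt_eqF.
  exact: mulr_gt0.
have E01 : 0 < E < 1.
  move: o0; rewrite /odds.
  have [E1|E1] := ltP E 1.
    move=> h; apply/andP; split => //.
    have -> : E = E / (1 - E) * (1 - E) by rewrite divfK // subr_eq0 gt_eqF.
    by apply: mulr_gt0 => //; rewrite subr_gt0.
  rewrite le_eqVlt in E1; case/orP: E1 => [/eqP <-|E1].
    by rewrite subrr invr0 mulr0 ltxx.
  have : E / (1 - E) < 0.
    by rewrite pmulr_rlt0 ?invr_lt0 ?subr_lt0 //; lra.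
  lra.
split => //.
case/andP: E01 => E0 E1.
have Ei : E^-1 = 1 + (1 - p) / p * u^-1.
  rewrite /u /odds; field.
  by apply/and4P; split; apply/negP => /eqP; lra.
rewrite Ei; have := inv_bounds _ _ L0 hu => /andP[a b].
have k0 : 0 <= (1 - p) / p by rewrite divr_ge0 //; lra.
by apply/andP; split; rewrite lerD2l ler_wpM2l.
Qed.

Lemma pt_min (p L y q z E E0 : R) : 0 < p < 1 -> 1 <= L -> (z = 0 \/ z = 1) ->
  L^-1 <= odds E / odds p <= L ->
  (y < q -> E0^-1 = 1 + (1 - p) / p * L) ->
  (q < y -> E0^-1 = 1 + (1 - p) / p * L^-1) ->
  y * z / E0 - q * z / E0 <= y * z / E - q * z / E.
Proof.
move=> p01 L1 z01 hE h1 h2.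
have [_ /andP[a b]] := odds_bounds _ _ _ p01 L1 hE.
case: z01 => ->; first by rewrite !mulr0 !mul0r subrr.
rewrite !mulr1; set i := E^-1 in a b *; set i0 := E0^-1 in h1 h2 *.
have [yq|qy|<-] := ltgtP y q; last by rewrite !subrr.
  by rewrite (h1 yq); nra.
by rewrite (h2 qy); nra.
Qed.

Lemma pt_max (p L y q z E E0 : R) : 0 < p < 1 -> 1 <= L -> (z = 0 \/ z = 1) ->
  L^-1 <= odds E / odds p <= L ->
  (q < y -> E0^-1 = 1 + (1 - p) / p * L) ->
  (y < q -> E0^-1 = 1 + (1 - p) / p * L^-1) ->
  y * z / E - q * z / E <= y * z / E0 - q * z / E0.
Proof.
move=> p01 L1 z01 hE h1 h2.
have [_ /andP[a b]] := odds_bounds _ _ _ p01 L1 hE.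
case: z01 => ->; first by rewrite !mulr0 !mul0r subrr.
rewrite !mulr1; set i := E^-1 in a b *; set i0 := E0^-1 in h1 h2 *.
have [yq|qy|<-] := ltgtP y q; last by rewrite !subrr.
  by rewrite (h2 yq); nra.
by rewrite (h1 qy); nra.
Qed.
End alg.


Section mainsec.
Context {R : realType} {d : measure_display} {Omega : measurableType d}
  {P : probability Omega R} {n : nat}
  {X : Omega -> n.-tuple R} {Z : Omega -> bool}
  {e : n.-tuple R -> R} {Lambda : R}.
Hypothesis mX : measurable_fun setT X.
Hypothesis L1 : 1 <= Lambda.
Hypothesis He : {ae P, forall w, 0 < e (X w) < 1}.

Lemma Zr01 w : Zr Z w = 0 :> R \/ Zr Z w = 1 :> R.
Proof. by rewrite /Zr; case: (Z w); [right|left]. Qed.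

Lemma W_ge0 Eb : E_infty P X e Lambda Eb -> {ae P, forall w, 0 <= Zr Z w / Eb w}.
Proof.
move=> [_ hE]; apply: filterS2 He hE => w h1 h2.
have [/andP[E0 _] _] := odds_bounds _ _ _ h1 L1 h2.
apply: divr_ge0; last exact: ltW.
by case: (Zr01 w) => ->.
Qed.

Lemma cond_int Eb (q : n.-tuple R -> R) :
  measurable_fun setT q -> P.-integrable setT (fun w => (q (X w))%:E) ->
  E_infty P X e Lambda Eb -> cond_exp_X_one P X (fun w => Zr Z w / Eb w) ->
  P.-integrable setT (fun w => (q (X w) * Zr Z w / Eb w)%:E) /\
  (\int[P]_w (q (X w) * Zr Z w / Eb w)%:E = \int[P]_w (q (X w))%:E)%E.
Proof.
move=> mq iq hE [iW hW].
have mW : measurable_fun setT (fun w => Zr Z w / Eb w).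
  by apply/measurable_EFinP; exact: measurable_int iW.
set V := fun w => Num.max (Zr Z w / Eb w) 0.
have mV : measurable_fun setT V by apply: measurable_maxr.
have aeV : {ae P, forall w, V w = Zr Z w / Eb w}.
  move: (W_ge0 _ hE); apply: filterS => w h; rewrite /V /Order.max; case: ltP => //; lra.
have hV : forall B, measurable B ->
    (\int[P]_(w in X @^-1` B) (V w)%:E = P (X @^-1` B))%E.
  move=> B mB; rewrite -hW //.
  apply: ae_eq_integral => //.
  - exact: preimX_meas.
  - by apply/measurable_EFinP; apply: measurable_funS mV.
  - by apply/measurable_EFinP; apply: measurable_funS mW.
  - by apply: filterS aeV => w -> _.
have [iqV KqV] := integ_ext mX mV (fun w => max0_ge0 _) hV mq iq.
have mf : measurable_fun setT (fun w => q (X w) * Zr Z w / Eb w).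
  rewrite (_ : (fun w => _) = (fun w => q (X w) * (Zr Z w / Eb w))); last first.
    by apply/funext => w; rewrite mulrA.
  by apply: measurable_funM => //; exact: measurableT_comp.
have aeF : {ae P, forall w, q (X w) * Zr Z w / Eb w = q (X w) * V w}.
  by apply: filterS aeV => w ->; rewrite mulrA.
have [if1 Kf] := ae_transfer mf iqV aeF.
by split => //; rewrite Kf.
Qed.
End mainsec.

Theorem prop4_main (R : realType) (d : measure_display) (Omega : measurableType d)
  (P : probability Omega R) (n : nat)
  (X : Omega -> n.-tuple R) (Y : Omega -> R) (Z : Omega -> bool)
  (e : n.-tuple R -> R) (F : R -> n.-tuple R -> bool -> R)
  (Lambda : R) (Em Ep : Omega -> R) :
  measurable_fun setT X -> measurable_fun setT Y -> measurable_fun setT Z ->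
  P.-integrable setT (fun w => (Y w)%:E) ->
  is_propensity P X Z e ->
  is_cond_cdf P X Y Z F ->
  1 <= Lambda ->
  let tau := Lambda / (Lambda + 1) in
  let qm := fun x => cond_quantile F (1 - tau) x true in
  let qp := fun x => cond_quantile F tau x true in
  P.-integrable setT (fun w => (qm (X w))%:E) ->
  P.-integrable setT (fun w => (qp (X w))%:E) ->
  E_infty P X e Lambda Em -> E_infty P X e Lambda Ep ->
  cond_exp_X_one P X (fun w => Zr Z w / Em w) ->
  cond_exp_X_one P X (fun w => Zr Z w / Ep w) ->
  P.-integrable setT (fun w => (Y w * Zr Z w / Em w)%:E) ->
  P.-integrable setT (fun w => (Y w * Zr Z w / Ep w)%:E) ->
  {ae P, forall w,
    (Y w < qm (X w) -> (Em w)^-1 = 1 + (1 - e (X w)) / e (X w) * Lambda) /\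
    (qm (X w) < Y w -> (Em w)^-1 = 1 + (1 - e (X w)) / e (X w) * Lambda^-1)} ->
  {ae P, forall w,
    (qp (X w) < Y w -> (Ep w)^-1 = 1 + (1 - e (X w)) / e (X w) * Lambda) /\
    (Y w < qp (X w) -> (Ep w)^-1 = 1 + (1 - e (X w)) / e (X w) * Lambda^-1)} ->
  [/\ solves_min P Y Z (feasible_quantile P X Y Z e Lambda qm) Em,
      solves_min P Y Z (feasible_cond P X Y Z e Lambda) Em,
      solves_max P Y Z (feasible_quantile P X Y Z e Lambda qp) Ep &
      solves_max P Y Z (feasible_cond P X Y Z e Lambda) Ep].
Proof.
move=> mX mY mZ iY [_ [_ He]] [Fnd [Frc [Fm [Fp [mF _]]]]] L1 tau qm qp
  iqm iqp EmI EpI cEm cEp iYm iYp specm specp.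
have t0 : 0 < tau by rewrite divr_gt0 //; lra.
have t1 : tau < 1 by rewrite ltr_pdivrMr; lra.
have mqm : measurable_fun setT qm.
  apply: (@quant_meas R _ _ (fun y x => F y x true) (1 - tau) (fun x => Fnd x true)
    (fun x y => Frc x true y) (fun x => Fm x true) (fun x => Fp x true) (fun y => mF y true)).
  by apply/andP; split; lra.
have mqp : measurable_fun setT qp.
  apply: (@quant_meas R _ _ (fun y x => F y x true) tau (fun x => Fnd x true)
    (fun x y => Frc x true y) (fun x => Fm x true) (fun x => Fp x true) (fun y => mF y true)).
  by apply/andP; split.
have [iqmm Kqmm] := cond_int mX L1 He _ _ mqm iqm EmI cEm.
have [iqpp Kqpp] := cond_int mX L1 He _ _ mqp iqp EpI cEp.
split.
- split; first by split.
  move=> Eb [EbI [iYb [iqb hqb]]]; rewrite /objective.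
  apply: (core_ineq iYm iqmm iYb iqb); first by rewrite Kqmm hqb.
  apply: filterS3 He EbI.2 specm => w h1 h2 [s1 s2].
  exact: pt_min _ _ _ _ _ _ _ h1 L1 (Zr01 w) h2 s1 s2.
- split; first by split.
  move=> Eb [EbI [iYb cEb]]; rewrite /objective.
  have [iqb hqb] := cond_int mX L1 He _ _ mqm iqm EbI cEb.
  apply: (core_ineq iYm iqmm iYb iqb); first by rewrite Kqmm hqb.
  apply: filterS3 He EbI.2 specm => w h1 h2 [s1 s2].
  exact: pt_min _ _ _ _ _ _ _ h1 L1 (Zr01 w) h2 s1 s2.
- split; first by split.
  move=> Eb [EbI [iYb [iqb hqb]]]; rewrite /objective.
  apply: (core_ineq iYb iqb iYp iqpp); first by rewrite Kqpp hqb.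
  apply: filterS3 He EbI.2 specp => w h1 h2 [s1 s2].
  exact: pt_max _ _ _ _ _ _ _ h1 L1 (Zr01 w) h2 s1 s2.
- split; first by split.
  move=> Eb [EbI [iYb cEb]]; rewrite /objective.
  have [iqb hqb] := cond_int mX L1 He _ _ mqp iqp EbI cEb.
  apply: (core_ineq iYb iqb iYp iqpp); first by rewrite Kqpp hqb.
  apply: filterS3 He EbI.2 specp => w h1 h2 [s1 s2].
  exact: pt_max _ _ _ _ _ _ _ h1 L1 (Zr01 w) h2 s1 s2.
Qed.

End HelpersM.

Theorem proposition4 (R : realType) (d : measure_display) (Omega : measurableType d)
  (P : probability Omega R) (n : nat)
  (X : Omega -> n.-tuple R) (Y : Omega -> R) (Z : Omega -> bool)
  (e : n.-tuple R -> R) (F : R -> n.-tuple R -> bool -> R)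
  (Lambda : R) (Em Ep : Omega -> R) :
  measurable_fun setT X -> measurable_fun setT Y -> measurable_fun setT Z ->
  P.-integrable setT (fun w => (Y w)%:E) ->
  is_propensity P X Z e ->
  is_cond_cdf P X Y Z F ->
  1 <= Lambda ->
  let tau := Lambda / (Lambda + 1) in
  let qm := fun x => cond_quantile F (1 - tau) x true in
  let qp := fun x => cond_quantile F tau x true in
  P.-integrable setT (fun w => (qm (X w))%:E) ->
  P.-integrable setT (fun w => (qp (X w))%:E) ->
  E_infty P X e Lambda Em -> E_infty P X e Lambda Ep ->
  cond_exp_X_one P X (fun w => Zr Z w / Em w) ->
  cond_exp_X_one P X (fun w => Zr Z w / Ep w) ->
  P.-integrable setT (fun w => (Y w * Zr Z w / Em w)%:E) ->
  P.-integrable setT (fun w => (Y w * Zr Z w / Ep w)%:E) ->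
  {ae P, forall w,
    (Y w < qm (X w) -> (Em w)^-1 = 1 + (1 - e (X w)) / e (X w) * Lambda) /\
    (qm (X w) < Y w -> (Em w)^-1 = 1 + (1 - e (X w)) / e (X w) * Lambda^-1)} ->
  {ae P, forall w,
    (qp (X w) < Y w -> (Ep w)^-1 = 1 + (1 - e (X w)) / e (X w) * Lambda) /\
    (Y w < qp (X w) -> (Ep w)^-1 = 1 + (1 - e (X w)) / e (X w) * Lambda^-1)} ->
  [/\ solves_min P Y Z (feasible_quantile P X Y Z e Lambda qm) Em,
      solves_min P Y Z (feasible_cond P X Y Z e Lambda) Em,
      solves_max P Y Z (feasible_quantile P X Y Z e Lambda qp) Ep &
      solves_max P Y Z (feasible_cond P X Y Z e Lambda) Ep].
Proof. exact: HelpersM.prop4_main. Qed.
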